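(* In the intersection type system: (1) if $\Gamma\vdash M[N/x]:\delta\mid\Delta$ and $\Gamma\vdash N:\delta'\mid\Delta$ are derivable, then $\Gamma\vdash(\lambda x.M)N:\delta\mid\Delta$ is derivable; (2) if $\Gamma\vdash\mu\alpha.(([\beta]M)[\alpha\Leftarrow N]):\delta\mid\Delta$ and $\Gamma\vdash N:\delta'\mid\Delta$ are derivable, then $\Gamma\vdash(\mu\alpha.[\beta]M)N:\delta\mid\Delta$ is derivable.
   Context: $\lambda\mu$-terms: $M,N ::= x \mid \lambda x.M \mid MN \mid \mu\alpha.C$, commands $C::=[\alpha]M$, over disjoint denumerable sets of term variables and names ($\lambda$ binds $x$, $\mu$ binds $\alpha$; bound and free variables/names assumed distinct). $M[N/x]$ is capture-avoiding substitution. Structural substitution $T[\alpha\Leftarrow L]$ ($T$ term or command): $([\alpha]M)[\alpha\Leftarrow L]=[\alpha](M[\alpha\Leftarrow L])L$; $([\beta]M)[\alpha\Leftarrow L]=[\beta](M[\alpha\Leftarrow L])$ if $\beta\neq\alpha$; $(\mu\beta.C)[\alpha\Leftarrow L]=\mu\beta.(C[\alpha\Leftarrow L])$; $x[\alpha\Leftarrow L]=x$; $(\lambda x.M)[\alpha\Leftarrow L]=\lambda x.(M[\alpha\Leftarrow L])$; $(MN)[\alpha\Leftarrow L]=(M[\alpha\Leftarrow L])(N[\alpha\Leftarrow L])$. Types: with constant $\nu$ and symbol $\omega$ (not itself a type), $\mathcal{T}_D:\ \delta ::= \nu \mid \omega\to\nu \mid \kappa\to\nu \mid \delta\wedge\delta$;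 $\mathcal{T}_C:\ \kappa ::= \delta\times\omega \mid \delta\times\kappa \mid \kappa\wedge\kappa$ ($\times$ right-associative). $\le$ is the least preorder on $\mathcal{T}_D$ and on $\mathcal{T}_C$ such that: $\sigma\wedge\tau\le\sigma$; $\sigma\wedge\tau\le\tau$; $\nu\le\omega\to\nu$; $\omega\to\nu\le\nu$; $\delta_1\times\delta_2\times\omega\le\delta_1\times\omega$; $(\delta_1\times\omega)\wedge(\delta_2\times\kappa)\le(\delta_1\wedge\delta_2)\times\kappa$; $(\delta_1\times\kappa_1)\wedge(\delta_2\times\kappa_2)\le(\delta_1\wedge\delta_2)\times(\kappa_1\wedge\kappa_2)$; $\delta_1\le\delta_2\Rightarrow\delta_1\times\omega\le\delta_2\times\omega$; $\delta_1\le\delta_2,\kappa_1\le\kappa_2\Rightarrow\delta_1\times\kappa_1\le\delta_2\times\kappa_2$; $\sigma\le\tau_1,\sigma\le\tau_2\Rightarrow\sigma\le\tau_1\wedge\tau_2$; $\kappa_2\le\kappa_1\Rightarrow\kappa_1\to\nu\le\kappa_2\to\nu$. Typing: bases $\Gamma$ (finite maps variables $\to\mathcal{T}_D$), name contexts $\Delta$ (finite maps names $\to\mathcal{T}_C$); judgements $\Gamma\vdash M:\delta\mid\Delta$, with variables of $\Gamma$ and names of $\Delta$ not bound in $M$. Rules: (ax) $\Gamma,x{:}\delta\vdash x:\delta\mid\Delta$; (abs) from $\Gamma,x{:}\delta\vdash M:\kappa\to\nu\mid\Delta$ infer $\Gamma\vdash\lambda x.M:\delta\times\kappa\to\nu\mid\Delta$;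 (app) from $\Gamma\vdash M:\delta\times\kappa\to\nu\mid\Delta$ and $\Gamma\vdash N:\delta\mid\Delta$ infer $\Gamma\vdash MN:\kappa\to\nu\mid\Delta$ ($\kappa\in\mathcal{T}_C$ or $\kappa=\omega$); ($\mu$) from $\Gamma\vdash M:\kappa'\to\nu\mid\alpha{:}\kappa,\beta{:}\kappa',\Delta$ infer $\Gamma\vdash\mu\alpha.[\beta]M:\kappa\to\nu\mid\beta{:}\kappa',\Delta$ ($\beta\neq\alpha$), and from $\Gamma\vdash M:\kappa\to\nu\mid\alpha{:}\kappa,\Delta$ infer $\Gamma\vdash\mu\alpha.[\alpha]M:\kappa\to\nu\mid\Delta$; ($\le$) from $\Gamma\vdash M:\delta\mid\Delta$, $\delta\le\delta'$ infer $\Gamma\vdash M:\delta'\mid\Delta$; ($\wedge$) from $\Gamma\vdash M:\delta\mid\Delta$, $\Gamma\vdash M:\delta'\mid\Delta$ infer $\Gamma\vdash M:\delta\wedge\delta'\mid\Delta$. *)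

(* Defs.v *)
From Stdlib Require Import List Arith.
Import ListNotations.

(* ---------- Syntax ----------
   Two disjoint sorts of de Bruijn indices: term variables and names.
   Lam binds term variable 0, Mu binds name 0. *)
Inductive term : Type :=
| Var : nat -> term
| Lam : term -> term
| App : term -> term -> term
| Mu  : cmd -> term
with cmd : Type :=
| Named : nat -> term -> cmd.

Definition up_ren (r : nat -> nat) : nat -> nat :=
  fun n => match n with 0 => 0 | S k => S (r k) end.

Fixpoint ren_var (r : nat -> nat) (M : term) : term :=
  match M with
  | Var n => Var (r n)
  | Lam M => Lam (ren_var (up_ren r) M)
  | App M N => App (ren_var r M) (ren_var r N)
  | Mu c => Mu (ren_var_c r c)
  end
with ren_var_c (r : nat -> nat) (c : cmd) : cmd :=
  match c with Named a M => Named a (ren_var r M) end.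

Fixpoint ren_name (r : nat -> nat) (M : term) : term :=
  match M with
  | Var n => Var n
  | Lam M => Lam (ren_name r M)
  | App M N => App (ren_name r M) (ren_name r N)
  | Mu c => Mu (ren_name_c (up_ren r) c)
  end
with ren_name_c (r : nat -> nat) (c : cmd) : cmd :=
  match c with Named a M => Named (r a) (ren_name r M) end.

Definition up_sub (s : nat -> term) : nat -> term :=
  fun n => match n with 0 => Var 0 | S k => ren_var S (s k) end.

Fixpoint subst (s : nat -> term) (M : term) : term :=
  match M with
  | Var n => s n
  | Lam M => Lam (subst (up_sub s) M)
  | App M N => App (subst s M) (subst s N)
  | Mu c => Mu (subst_c (fun n => ren_name S (s n)) c)
  end
with subst_c (s : nat -> term) (c : cmd) : cmd :=
  match c with Named a M => Named a (subst s M) end.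

(* M[N/x] where x is the variable bound by the enclosing lambda (index 0) *)
Definition subst0 (M N : term) : term :=
  subst (fun n => match n with 0 => N | S k => Var k end) M.

(* structural substitution T[a <= L] *)
Fixpoint ssub (a : nat) (L : term) (M : term) : term :=
  match M with
  | Var n => Var n
  | Lam M => Lam (ssub a (ren_var S L) M)
  | App M1 M2 => App (ssub a L M1) (ssub a L M2)
  | Mu c => Mu (ssub_c (S a) (ren_name S L) c)
  end
with ssub_c (a : nat) (L : term) (c : cmd) : cmd :=
  match c with
  | Named b M =>
      if Nat.eqb b a then Named b (App (ssub a L M) L)
      else Named b (ssub a L M)
  end.

Inductive tyD : Type :=
| Nu : tyD
| OmArr : tyD                   (* omega -> nu *)
| KArr : tyC -> tyD             (* kappa -> nu *)
| AndD : tyD -> tyD -> tyD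
with tyC : Type :=
| ProdOm : tyD -> tyC           (* delta x omega *)
| Prod : tyD -> tyC -> tyC
| AndC : tyC -> tyC -> tyC.

(* "kappa in T_C or kappa = omega": None stands for omega *)
Definition arr (k : option tyC) : tyD :=
  match k with None => OmArr | Some k => KArr k end.
Definition prod (d : tyD) (k : option tyC) : tyC :=
  match k with None => ProdOm d | Some k => Prod d k end.

Inductive leD : tyD -> tyD -> Prop :=
| leD_refl d : leD d d
| leD_trans d1 d2 d3 : leD d1 d2 -> leD d2 d3 -> leD d1 d3
| leD_andl d1 d2 : leD (AndD d1 d2) d1
| leD_andr d1 d2 : leD (AndD d1 d2) d2
| leD_nu_om : leD Nu OmArr
| leD_om_nu : leD OmArr Nu
| leD_and d t1 t2 : leD d t1 -> leD d t2 -> leD d (AndD t1 t2)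
| leD_arr k1 k2 : leC k2 k1 -> leD (KArr k1) (KArr k2)
with leC : tyC -> tyC -> Prop :=
| leC_refl k : leC k k
| leC_trans k1 k2 k3 : leC k1 k2 -> leC k2 k3 -> leC k1 k3
| leC_andl k1 k2 : leC (AndC k1 k2) k1
| leC_andr k1 k2 : leC (AndC k1 k2) k2
| leC_drop d1 d2 : leC (Prod d1 (ProdOm d2)) (ProdOm d1)
| leC_and_om d1 d2 k :
    leC (AndC (ProdOm d1) (Prod d2 k)) (Prod (AndD d1 d2) k)
| leC_and_prod d1 d2 k1 k2 :
    leC (AndC (Prod d1 k1) (Prod d2 k2)) (Prod (AndD d1 d2) (AndC k1 k2))
| leC_prodom d1 d2 : leD d1 d2 -> leC (ProdOm d1) (ProdOm d2)
| leC_prod d1 d2 k1 k2 : leD d1 d2 -> leC k1 k2 -> leC (Prod d1 k1) (Prod d2 k2)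
| leC_and k t1 t2 : leC k t1 -> leC k t2 -> leC k (AndC t1 t2).

Definition ctxG := list (option tyD).
Definition ctxD := list (option tyC).

Inductive typ : ctxG -> term -> tyD -> ctxD -> Prop :=
| t_ax G D x d :
    nth x G None = Some d -> typ G (Var x) d D
| t_abs G D M d k :
    typ (Some d :: G) M (arr k) D -> typ G (Lam M) (KArr (prod d k)) D
| t_app G D M N d k :
    typ G M (KArr (prod d k)) D -> typ G N d D -> typ G (App M N) (arr k) D
| t_mu G D M k k' b :
    nth b D None = Some k' ->
    typ G M (KArr k') (Some k :: D) ->
    typ G (Mu (Named (S b) M)) (KArr k) D
| t_mu_self G D M k :
    typ G M (KArr k) (Some k :: D) ->
    typ G (Mu (Named 0 M)) (KArr k) D
| t_le G D M d d' :
    typ G M d D -> leD d d' -> typ G M d' D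
| t_and G D M d d' :
    typ G M d D -> typ G M d' D -> typ G M (AndD d d') D.

(* Main.v *)
Require Import Defs.
From Stdlib Require Import List Arith Lia.
Import ListNotations.

Fixpoint upd {A : Type} (a : nat) (x : option A) (L : list (option A)) : list (option A) :=
  match a with
  | 0 => x :: tl L
  | S a => hd None L :: upd a x (tl L)
  end.

Lemma nth_upd {A : Type} a x (L : list (option A)) b :
  nth b (upd a x L) None = if Nat.eqb b a then x else nth b L None.
Proof.
  revert a L; induction b as [|b IH]; intros [|a] [|y L]; simpl; try reflexivity.
  - destruct b; reflexivity.
  - rewrite IH. simpl. destruct (Nat.eqb b a); [reflexivity|destruct b; reflexivity].
  - rewrite IH. reflexivity.
Qed.

Fixpoint atomK (k : tyC) (d : tyD) : Prop :=
  match d with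
  | KArr k0 => k = k0
  | AndD d1 d2 => atomK k d1 \/ atomK k d2
  | _ => False
  end.

Lemma leD_inv : forall d d', leD d d' -> forall k, atomK k d' -> exists q, atomK q d /\ leC k q.
Proof.
  induction 1; intros k Hk; simpl in *.
  - exists k; split; auto; constructor.
  - destruct (IHleD2 _ Hk) as [q [Hq Hkq]]. destruct (IHleD1 _ Hq) as [q' [Hq' H']].
    exists q'; split; auto. eapply leC_trans; eauto.
  - exists k; split; auto; constructor.
  - exists k; split; auto; constructor.
  - contradiction.
  - contradiction.
  - destruct Hk; auto.
  - subst. exists k1; split; auto.
Qed.

Lemma app_gen : forall G P e D, typ G P e D -> forall Q R, P = App Q R ->
  forall k, atomK k e -> exists dl, typ G Q (KArr (Prod dl k)) D /\ typ G R dl D.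
Proof.
  induction 1; intros Q0 R0 Heq k0 Hat; try discriminate.
  - injection Heq as -> ->. destruct k as [k|]; simpl in Hat; [subst|contradiction].
    exists d; auto.
  - destruct (leD_inv _ _ H0 _ Hat) as [q [Hq Hle]].
    destruct (IHtyp _ _ Heq _ Hq) as [dl [H1 H2]]. exists dl; split; auto.
    eapply t_le; [exact H1|]. apply leD_arr. apply leC_prod; [constructor|auto].
  - simpl in Hat; destruct Hat; eauto.
Qed.

Lemma var_gen : forall G P e D, typ G P e D -> forall n, P = Var n ->
  exists e0, nth n G None = Some e0 /\ leD e0 e.
Proof.
  induction 1; intros n Heq; try discriminate.
  - injection Heq as ->. exists d; split; auto; constructor.
  - destruct (IHtyp _ Heq) as [e0 [H1 H2]]. exists e0; split; auto. eapply leD_trans; eauto.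
  - destruct (IHtyp1 _ Heq) as [e0 [H1 H2]]. destruct (IHtyp2 _ Heq) as [e1 [H3 H4]].
    rewrite H1 in H3; injection H3 as <-. exists e0; split; auto. constructor; auto.
Qed.

Lemma ren_var_fwd : forall G P d D, typ G P d D -> forall r G',
  (forall x e, nth x G None = Some e -> nth (r x) G' None = Some e) ->
  typ G' (ren_var r P) d D.
Proof.
  induction 1; intros r G' HG; simpl.
  - constructor; auto.
  - constructor. apply IHtyp. intros [|x] e He; simpl in *; auto.
  - econstructor; eauto.
  - econstructor; eauto.
  - econstructor; eauto.
  - eapply t_le; eauto.
  - apply t_and; eauto.
Qed.

Lemma ren_var_bwd : forall G' P' d D, typ G' P' d D -> forall r P G, P' = ren_var r P ->
  (forall x e, nth (r x) G' None = Some e -> nth x G None = Some e) ->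
  typ G P d D.
Proof.
  induction 1; intros r P0 G0 Heq HG.
  - destruct P0 as [y| | |[? ?]]; simpl in Heq; try discriminate.
    injection Heq as ->. constructor; auto.
  - destruct P0 as [y|P1| |[? ?]]; simpl in Heq; try discriminate.
    injection Heq as ->. constructor. eapply IHtyp; [reflexivity|].
    intros [|x] e He; simpl in *; auto.
  - destruct P0 as [y|P1|P1 P2|[? ?]]; simpl in Heq; try discriminate.
    injection Heq; intros; subst. eapply t_app; eauto.
  - destruct P0 as [y|P1|P1 P2|[a P1]]; simpl in Heq; try discriminate.
    injection Heq; intros; subst. eapply t_mu; eauto.
  - destruct P0 as [y|P1|P1 P2|[a P1]]; simpl in Heq; try discriminate.
    injection Heq; intros; subst. eapply t_mu_self; eauto.
  - eapply t_le; eauto.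
  - apply t_and; eauto.
Qed.

Lemma ren_name_fwd : forall G P d D, typ G P d D -> forall r D',
  (forall a k, nth a D None = Some k -> nth (r a) D' None = Some k) ->
  typ G (ren_name r P) d D'.
Proof.
  induction 1; intros r D' HD; simpl.
  - constructor; auto.
  - constructor; auto.
  - econstructor; eauto.
  - eapply t_mu; eauto. apply IHtyp. intros [|x] e He; simpl in *; auto.
  - eapply t_mu_self. apply IHtyp. intros [|x] e He; simpl in *; auto.
  - eapply t_le; eauto.
  - apply t_and; eauto.
Qed.

Lemma ren_name_bwd : forall G P' d D', typ G P' d D' -> forall r P D, P' = ren_name r P ->
  (forall a k, nth (r a) D' None = Some k -> nth a D None = Some k) ->
  typ G P d D.
Proof.
  induction 1; intros r P0 D0 Heq HD.
  - destruct P0 as [y| | |[? ?]]; simpl in Heq; try discriminate.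
    injection Heq as ->. constructor; auto.
  - destruct P0 as [y|P1| |[? ?]]; simpl in Heq; try discriminate.
    injection Heq as ->. constructor. eauto.
  - destruct P0 as [y|P1|P1 P2|[? ?]]; simpl in Heq; try discriminate.
    injection Heq as -> ->. econstructor; eauto.
  - destruct P0 as [y|P1|P1 P2|[[|a] P1]]; simpl in Heq; try discriminate.
    injection Heq as Hb ->. subst b. eapply t_mu; eauto.
    eapply IHtyp; [reflexivity|]. intros [|x] e He; simpl in *; auto.
  - destruct P0 as [y|P1|P1 P2|[[|a] P1]]; simpl in Heq; try discriminate.
    injection Heq as ->. eapply t_mu_self.
    eapply IHtyp; [reflexivity|]. intros [|x] e He; simpl in *; auto.
  - eapply t_le; eauto.
  - apply t_and; eauto.
Qed.

Lemma weakG : forall G P d D, typ G P d D -> forall G',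
  (forall x e, nth x G None = Some e -> exists e', nth x G' None = Some e' /\ leD e' e) ->
  typ G' P d D.
Proof.
  induction 1; intros G' HG.
  - destruct (HG _ _ H) as [e' [H1 H2]]. eapply t_le; [constructor; eauto|auto].
  - constructor. apply IHtyp. intros [|x] e He; simpl in *; auto.
    injection He as <-. eexists; split; [reflexivity|constructor].
  - eapply t_app; eauto.
  - eapply t_mu; eauto.
  - eapply t_mu_self; eauto.
  - eapply t_le; eauto.
  - apply t_and; eauto.
Qed.

Lemma weakD : forall G P d D, typ G P d D -> forall D',
  (forall b k, nth b D None = Some k -> exists k', nth b D' None = Some k' /\ leC k' k) ->
  typ G P d D'.
Proof.
  induction 1; intros D' HD.
  - constructor; auto.
  - constructor; auto.
  - econstructor; eauto.
  - destruct (HD _ _ H) as [k2 [H1 H2]]. eapply t_mu; eauto.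
    eapply t_le; [apply IHtyp|apply leD_arr; exact H2].
    intros [|x] e He; simpl in *; auto. injection He as <-. eexists; split; [reflexivity|constructor].
  - eapply t_mu_self. apply IHtyp.
    intros [|x] e He; simpl in *; auto. injection He as <-. eexists; split; [reflexivity|constructor].
  - eapply t_le; eauto.
  - apply t_and; eauto.
Qed.

Definition mo (o1 o2 : option tyD) : option tyD :=
  match o1, o2 with
  | Some a, Some b => Some (AndD a b)
  | Some a, None => Some a
  | None, o => o
  end.

Fixpoint mergeG (G1 G2 : ctxG) : ctxG :=
  match G1, G2 with
  | [], _ => G2
  | _, [] => G1
  | o1 :: G1', o2 :: G2' => mo o1 o2 :: mergeG G1' G2'
  end.

Lemma nth_merge : forall G1 G2 x, nth x (mergeG G1 G2) None = mo (nth x G1 None) (nth x G2 None).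
Proof.
  induction G1 as [|o G1 IH]; intros [|o2 G2] x; simpl.
  - destruct x; reflexivity.
  - destruct x; reflexivity.
  - destruct x; simpl; [destruct o; reflexivity|]. destruct (nth x G1 None); [|destruct x]; reflexivity.
  - destruct x; simpl; auto.
Qed.

Lemma merge_l : forall G1 G2 P d D, typ G1 P d D -> typ (mergeG G1 G2) P d D.
Proof.
  intros. eapply weakG; eauto. intros x e He. rewrite nth_merge, He.
  destruct (nth x G2 None); simpl; eexists; split; try reflexivity; constructor.
Qed.

Lemma merge_r : forall G1 G2 P d D, typ G2 P d D -> typ (mergeG G1 G2) P d D.
Proof.
  intros. eapply weakG; eauto. intros x e He. rewrite nth_merge, He.
  destruct (nth x G1 None); simpl; eexists; split; try reflexivity; constructor.
Qed.

Lemma merge_ok : forall (G1 G2 : ctxG) (Q : nat -> tyD -> Prop),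
  (forall x e, nth x G1 None = Some e -> Q x e) ->
  (forall x e, nth x G2 None = Some e -> Q x e) ->
  (forall x a b, Q x a -> Q x b -> Q x (AndD a b)) ->
  forall x e, nth x (mergeG G1 G2) None = Some e -> Q x e.
Proof.
  intros G1 G2 Q H1 H2 H3 x e He. rewrite nth_merge in He.
  destruct (nth x G1 None) eqn:E1, (nth x G2 None) eqn:E2; simpl in He;
    try discriminate; injection He as <-; eauto.
Qed.

Lemma var_ok : forall G D s y d, typ G (s y) d D ->
  exists G', typ G' (Var y) d D /\ (forall x e, nth x G' None = Some e -> typ G (s x) e D).
Proof.
  intros. exists (upd y (Some d) []). split.
  - constructor. rewrite nth_upd, Nat.eqb_refl. reflexivity.
  - intros x e He. rewrite nth_upd in He. destruct (Nat.eqb_spec x y).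
    + subst. injection He as <-. auto.
    + destruct x; discriminate.
Qed.

Lemma exp : forall G P d D, typ G P d D -> forall M s, P = subst s M ->
  exists G', typ G' M d D /\ (forall x e, nth x G' None = Some e -> typ G (s x) e D).
Proof.
  induction 1; intros M0 s Heq.
  - destruct M0 as [y|?|? ?|[? ?]]; simpl in Heq; try discriminate.
    apply var_ok. rewrite <- Heq. constructor; auto.
  - destruct M0 as [y|M1|? ?|[? ?]]; simpl in Heq; try discriminate.
    + apply var_ok. rewrite <- Heq. constructor; auto.
    + injection Heq as Heq. destruct (IHtyp _ _ Heq) as [G' [HM HG]]. exists (tl G'). split.
      * apply t_abs. eapply weakG; [exact HM|]. intros [|x] e He; simpl.
        -- apply HG in He. simpl in He. destruct (var_gen _ _ _ _ He 0 eq_refl) as [e0 [H1 H2]].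
           simpl in H1. injection H1 as <-. eexists; split; [reflexivity|auto].
        -- exists e; split; [|constructor]. destruct G'; simpl in *; [destruct x; discriminate|exact He].
      * intros x e He. assert (He' : nth (S x) G' None = Some e)
          by (destruct G'; simpl in *; [destruct x; discriminate|exact He]).
        apply HG in He'. simpl in He'. eapply ren_var_bwd; [exact He'|reflexivity|].
        intros y e' Hy; simpl in Hy; exact Hy.
  - destruct M0 as [y|M1|M1 M2|[? ?]]; simpl in Heq; try discriminate.
    + apply var_ok. rewrite <- Heq. eapply t_app; eauto.
    + injection Heq as H1 H2. destruct (IHtyp1 _ _ H1) as [G1 [HM1 HG1]].
      destruct (IHtyp2 _ _ H2) as [G2 [HM2 HG2]]. exists (mergeG G1 G2). split.
      * eapply t_app; [apply merge_l; exact HM1|apply merge_r; exact HM2].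
      * apply (merge_ok G1 G2 (fun x e => typ G (s x) e D)); auto. intros; apply t_and; auto.
  - destruct M0 as [y|M1|M1 M2|[a M1]]; simpl in Heq; try discriminate.
    + apply var_ok. rewrite <- Heq. eapply t_mu; eauto.
    + injection Heq as H1 H2. subst a. destruct (IHtyp _ _ H2) as [G' [HM HG]].
      exists G'. split; [eapply t_mu; eauto|].
      intros x e He. apply HG in He. eapply ren_name_bwd; [exact He|reflexivity|].
      intros y k0 Hy; simpl in Hy; exact Hy.
  - destruct M0 as [y|M1|M1 M2|[a M1]]; simpl in Heq; try discriminate.
    + apply var_ok. rewrite <- Heq. eapply t_mu_self; eauto.
    + injection Heq as H1 H2. subst a. destruct (IHtyp _ _ H2) as [G' [HM HG]].
      exists G'. split; [eapply t_mu_self; eauto|].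
      intros x e He. apply HG in He. eapply ren_name_bwd; [exact He|reflexivity|].
      intros y k0 Hy; simpl in Hy; exact Hy.
  - destruct (IHtyp _ _ Heq) as [G' [HM HG]]. exists G'; split; auto. eapply t_le; eauto.
  - destruct (IHtyp1 _ _ Heq) as [G1 [HM1 HG1]].
    destruct (IHtyp2 _ _ Heq) as [G2 [HM2 HG2]]. exists (mergeG G1 G2). split.
    + apply t_and; [apply merge_l|apply merge_r]; auto.
    + apply (merge_ok G1 G2 (fun x e => typ G (s x) e D)); auto. intros; apply t_and; auto.
Qed.

Lemma lam_lemma : forall d G D M N d0, typ (Some d0 :: G) M d D -> typ G N d0 D ->
  typ G (App (Lam M) N) d D.
Proof.
  induction d; intros G D M N d0 HM HN.
  - eapply t_le; [|apply leD_om_nu]. change OmArr with (arr None).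
    eapply t_app; [|exact HN]. apply (t_abs _ _ _ d0 None). simpl.
    eapply t_le; [exact HM|apply leD_nu_om].
  - change OmArr with (arr None).
    eapply t_app; [|exact HN]. apply (t_abs _ _ _ d0 None). exact HM.
  - change (KArr t) with (arr (Some t)).
    eapply t_app; [|exact HN]. apply (t_abs _ _ _ d0 (Some t)). exact HM.
  - apply t_and.
    + eapply IHd1; [|exact HN]. eapply t_le; [exact HM|apply leD_andl].
    + eapply IHd2; [|exact HN]. eapply t_le; [exact HM|apply leD_andr].
Qed.

Lemma part1 : forall (G : ctxG) (D : ctxD) (M N : term) (d d' : tyD),
      typ G (subst0 M N) d D -> typ G N d' D ->
      typ G (App (Lam M) N) d D.
Proof.
  intros G D M N d d' H HN. unfold subst0 in H.
  destruct (exp _ _ _ _ H _ _ eq_refl) as [G' [HM HG]].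
  set (d0 := match nth 0 G' None with Some e => e | None => d' end).
  assert (HN0 : typ G N d0 D).
  { unfold d0. destruct (nth 0 G' None) eqn:E; auto. apply (HG 0 t E). }
  apply (lam_lemma _ _ _ _ _ d0); auto.
  eapply weakG; [exact HM|]. intros [|x] e He; simpl.
  - unfold d0; rewrite He. eexists; split; [reflexivity|constructor].
  - apply HG in He. simpl in He. destruct (var_gen _ _ _ _ He x eq_refl) as [e0 [H1 H2]]. eauto.
Qed.

Fixpoint term_ind' (P : term -> Prop)
  (HV : forall n, P (Var n)) (HL : forall M, P M -> P (Lam M))
  (HA : forall M N, P M -> P N -> P (App M N))
  (HM : forall b M, P M -> P (Mu (Named b M))) (M : term) {struct M} : P M :=
  match M with
  | Var n => HV n
  | Lam M0 => HL M0 (term_ind' P HV HL HA HM M0)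
  | App M1 M2 => HA M1 M2 (term_ind' P HV HL HA HM M1) (term_ind' P HV HL HA HM M2)
  | Mu (Named b M0) => HM b M0 (term_ind' P HV HL HA HM M0)
  end.

Lemma upd_weak : forall G M e a k1 k2 (D : ctxD), leC k1 k2 ->
  typ G M e (upd a (Some k2) D) -> typ G M e (upd a (Some k1) D).
Proof.
  intros. eapply weakD; eauto. intros b k Hb. rewrite nth_upd in *.
  destruct (Nat.eqb b a).
  - injection Hb as <-. eauto.
  - eexists; split; eauto; constructor.
Qed.

Lemma ex_and : forall G D M a L k e1 e2,
  (exists d1, typ G L d1 D /\ typ G M e1 (upd a (Some (Prod d1 k)) D)) ->
  (exists d2, typ G L d2 D /\ typ G M e2 (upd a (Some (Prod d2 k)) D)) ->
  exists d, typ G L d D /\ typ G M (AndD e1 e2) (upd a (Some (Prod d k)) D).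
Proof.
  intros G D M a L k e1 e2 [d1 [H1 H2]] [d2 [H3 H4]]. exists (AndD d1 d2). split.
  - apply t_and; auto.
  - apply t_and; eapply upd_weak; eauto; apply leC_prod; try apply leC_refl.
    apply leD_andl. apply leD_andr.
Qed.

Lemma name_shift_fwd : forall G L d D o, typ G L d D -> typ G (ren_name S L) d (o :: D).
Proof. intros. eapply ren_name_fwd; eauto. Qed.

Lemma name_shift_bwd : forall G L d D o, typ G (ren_name S L) d (o :: D) -> typ G L d D.
Proof. intros. eapply ren_name_bwd; eauto. Qed.

Lemma sexp : forall M G D e a L k d0, typ G (ssub a L M) e D -> nth a D None = Some k ->
  typ G L d0 D -> exists d, typ G L d D /\ typ G M e (upd a (Some (Prod d k)) D).
Proof.
  induction M as [n|M0 IH|M1 M2 IH1 IH2|b M0 IH] using term_ind';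
    intros G D e a L k d0 H Ha HL; remember (ssub a L _) as P eqn:HP;
    revert Ha HL HP; induction H; intros Ha HL HP; try discriminate;
    try (destruct (IHtyp Ha HL HP) as [d1 [H1 H2]]; exists d1; split; [exact H1|eapply t_le; eauto]; fail);
    try (apply ex_and; auto; fail).
  - simpl in HP. injection HP as ->. exists d0; split; auto. constructor; auto.
  - simpl in HP. injection HP as HP.
    rewrite HP in H.
    destruct (IH _ _ _ _ _ _ d0 H Ha) as [d1 [H1 H2]].
    + eapply ren_var_fwd; eauto.
    + exists d1. split; [eapply ren_var_bwd; eauto|]. constructor; auto.
  - simpl in HP. injection HP as HP1 HP2. subst.
    destruct (IH1 _ _ _ _ _ _ d0 H Ha HL) as [d1 [H1 H2]].
    destruct (IH2 _ _ _ _ _ _ d0 H0 Ha HL) as [d2 [H3 H4]].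
    exists (AndD d1 d2). split; [apply t_and; auto|].
    eapply t_app.
    + eapply upd_weak; [|exact H2]. apply leC_prod; [apply leD_andl|apply leC_refl].
    + eapply upd_weak; [|exact H4]. apply leC_prod; [apply leD_andr|apply leC_refl].
  - simpl in HP. destruct (Nat.eqb b (S a)) eqn:Eb.
    + apply Nat.eqb_eq in Eb. subst b. injection HP as Hb HM. subst b0.
      rewrite Ha in H. injection H as <-.
      subst M. destruct (app_gen _ _ _ _ H0 _ _ eq_refl k eq_refl) as [dl [Q1 Q2]].
      destruct (IH _ _ _ (S a) (ren_name S L) k dl Q1 Ha Q2) as [d1 [H1 H2]].
      exists (AndD dl d1). split.
      * apply t_and; eapply name_shift_bwd; eauto.
      * eapply t_mu. { rewrite nth_upd, Nat.eqb_refl. reflexivity. }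
        eapply t_le.
        -- change (Some k0 :: upd a (Some (Prod (AndD dl d1) k)) D)
             with (upd (S a) (Some (Prod (AndD dl d1) k)) (Some k0 :: D)).
           eapply upd_weak; [|exact H2]. apply leC_prod; [apply leD_andr|apply leC_refl].
        -- apply leD_arr. apply leC_prod; [apply leD_andl|apply leC_refl].
    + injection HP as Hb HM. subst b.
      assert (Hne : b0 <> a) by (intro; subst; rewrite Nat.eqb_refl in Eb; discriminate).
      subst M. destruct (IH _ _ _ (S a) (ren_name S L) k d0 H0 Ha) as [d1 [H1 H2]].
      { apply name_shift_fwd; auto. }
      exists d1. split; [eapply name_shift_bwd; eauto|].
      eapply t_mu; [rewrite nth_upd; apply Nat.eqb_neq in Hne; rewrite Hne; exact H|].
      exact H2.
  - simpl in HP. destruct (Nat.eqb b (S a)) eqn:Eb.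
    + apply Nat.eqb_eq in Eb. subst b. discriminate.
    + injection HP as Hb HM. subst b.
      subst M. destruct (IH _ _ _ (S a) (ren_name S L) k d0 H Ha) as [d1 [H1 H2]].
      { apply name_shift_fwd; auto. }
      exists d1. split; [eapply name_shift_bwd; eauto|].
      eapply t_mu_self. exact H2.
Qed.

Lemma part2 : forall (G : ctxG) (D : ctxD) (b : nat) (M N : term) (d d' : tyD),
      typ G (Mu (ssub_c 0 (ren_name S N) (Named b M))) d D -> typ G N d' D ->
      typ G (App (Mu (Named b M)) N) d D.
Proof.
  intros G D b M N d d' H HN.
  remember (Mu (ssub_c 0 (ren_name S N) (Named b M))) as P eqn:HP.
  revert HN HP. induction H; intros HN HP; try discriminate.
  - destruct b as [|b1]; simpl in HP; [discriminate|].
    injection HP as Hb HM. subst b0 M0.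
    destruct (sexp _ _ _ _ 0 (ren_name S N) k d' H0 eq_refl (name_shift_fwd _ _ _ _ _ HN))
      as [d1 [H1 H2]].
    change (KArr k) with (arr (Some k)).
    eapply (t_app _ _ _ _ d1 (Some k)).
    + simpl. eapply t_mu; eauto.
    + eapply name_shift_bwd; eauto.
  - destruct b as [|b1]; simpl in HP; [|discriminate].
    injection HP as HM. subst M0.
    destruct (app_gen _ _ _ _ H _ _ eq_refl k eq_refl) as [dl [Q1 Q2]].
    destruct (sexp _ _ _ _ 0 (ren_name S N) k dl Q1 eq_refl Q2) as [d1 [H1 H2]].
    change (KArr k) with (arr (Some k)).
    eapply (t_app _ _ _ _ (AndD dl d1) (Some k)).
    + simpl. apply t_mu_self.
      change (Some (Prod (AndD dl d1) k) :: D) with (upd 0 (Some (Prod (AndD dl d1) k)) (Some k :: D)).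
      eapply t_le.
      * eapply upd_weak; [|exact H2]. apply leC_prod; [apply leD_andr|apply leC_refl].
      * apply leD_arr. apply leC_prod; [apply leD_andl|apply leC_refl].
    + apply t_and; eapply name_shift_bwd; eauto.
  - eapply t_le; eauto.
  - apply t_and; eauto.
Qed.

Theorem mainTheorem13 :
  (forall (G : ctxG) (D : ctxD) (M N : term) (d d' : tyD),
      typ G (subst0 M N) d D -> typ G N d' D ->
      typ G (App (Lam M) N) d D)
  /\
  (forall (G : ctxG) (D : ctxD) (b : nat) (M N : term) (d d' : tyD),
      typ G (Mu (ssub_c 0 (ren_name S N) (Named b M))) d D -> typ G N d' D ->
      typ G (App (Mu (Named b M)) N) d D).
Proof.
  split; [exact part1|exact part2].
Qed.
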